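(* Let $\mathbb{R}^m$ be endowed with an arbitrary norm $\|\cdot\|$ and let $\mathbb{R}^n$ be endowed with the $\ell_1$ norm $\|\cdot\|_1$. Then for every $A\in\mathbb{R}^{m\times n}$ with at least two different columns, \[ \mathrm{diam}(A) = \max_{u\in \mathrm{conv}(A),\; x\in \Delta_{n-1}\setminus Z(u)} \frac{2\|Ax - u\|}{\mathrm{dist}(x,Z(u))},\qquad \Phi(A) = \min_{u\in \mathrm{conv}(A),\; x\in \Delta_{n-1}\setminus Z(u)} \frac{2\|Ax - u\|}{\mathrm{dist}(x,Z(u))}. \]
   Context: $\Delta_{n-1}=\{x\in\mathbb{R}^n_+ : \sum_i x_i=1\}$. For $A\in\mathbb{R}^{m\times n}$, $A$ is also identified with the set of its columns $a_1,\dots,a_n$, and $\mathrm{conv}(A)=\{Ax: x\in\Delta_{n-1}\}$. For $u\in\mathrm{conv}(A)$, $Z(u)=\{z\in\Delta_{n-1}: Az=u\}$, and $\mathrm{dist}(x,Z(u))=\min_{z\in Z(u)}\|x-z\|_1$ (distance in the norm of $\mathbb{R}^n$). $\mathrm{diam}(A)=\sup_{u,v\in A}\|u-v\|$ (norm of $\mathbb{R}^m$). The facial distance is $\Phi(A)=\min\{\mathrm{dist}(F,\mathrm{conv}(A\setminus F)) : F \text{ a face of } \mathrm{conv}(A),\ \emptyset\neq F\neq \mathrm{conv}(A)\}$, where $A\setminus F$ is the set of columns of $A$ not in $F$ and $\mathrm{dist}(F,G)=\inf_{u\in F,w\in G}\|u-w\|$ in the norm of $\mathbb{R}^m$. *)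

(* Defs.v *)
From mathcomp Require Import all_boot all_order all_algebra.
From mathcomp Require Import boolp classical_sets reals.
Set Implicit Arguments. Unset Strict Implicit. Unset Printing Implicit Defensive.
Import Order.TTheory GRing.Theory Num.Theory.
Local Open Scope ring_scope.
Local Open Scope classical_set_scope.

Section Defs.
Variable R : realType.

Definition is_norm (m : nat) (N : 'cV[R]_m -> R) : Prop :=
  [/\ forall x, N x = 0 -> x = 0,
      forall (c : R) x, N (c *: x) = `|c| * N x
    & forall x y, N (x + y) <= N x + N y].

Definition l1 (n : nat) (x : 'cV[R]_n) : R := \sum_(i < n) `|x i 0|.

Definition simplex (n : nat) : set 'cV[R]_n :=
  [set x | (forall i, 0 <= x i 0) /\ \sum_(i < n) x i 0 = 1].

Definition convA (m n : nat) (A : 'M[R]_(m, n)) : set 'cV[R]_m :=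
  [set A *m x | x in @simplex n].

Definition Zset (m n : nat) (A : 'M[R]_(m, n)) (u : 'cV[R]_m) : set 'cV[R]_n :=
  [set z | @simplex n z /\ A *m z = u].

(* dist(x, Z(u)) in the l1 norm (an infimum; it is attained). *)
Definition distZ (m n : nat) (A : 'M[R]_(m, n)) (u : 'cV[R]_m) (x : 'cV[R]_n) : R :=
  inf [set l1 (x - z) | z in Zset A u].

Definition diamA (m n : nat) (N : 'cV[R]_m -> R) (A : 'M[R]_(m, n)) : R :=
  \big[Num.max/0]_(i < n) \big[Num.max/0]_(j < n) N (col i A - col j A).

Definition convex_set (m : nat) (C : set 'cV[R]_m) : Prop :=
  forall x y (t : R), C x -> C y -> 0 <= t <= 1 -> C (t *: x + (1 - t) *: y).

Definition is_face (m : nat) (C F : set 'cV[R]_m) : Prop :=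
  [/\ F `<=` C, convex_set F &
      forall x y (t : R), C x -> C y -> 0 < t < 1 ->
        F (t *: x + (1 - t) *: y) -> F x /\ F y].

Definition conv_outside (m n : nat) (A : 'M[R]_(m, n)) (F : set 'cV[R]_m)
  : set 'cV[R]_m :=
  [set A *m x | x in [set x | @simplex n x /\ forall j, F (col j A) -> x j 0 = 0]].

Definition set_dist (m : nat) (N : 'cV[R]_m -> R) (F G : set 'cV[R]_m) : R :=
  inf [set N (u - w) | u in F & w in G].

Definition facial_dist (m n : nat) (N : 'cV[R]_m -> R) (A : 'M[R]_(m, n)) : R :=
  inf [set set_dist N F (conv_outside A F) | F in
        [set F | is_face (convA A) F /\ F !=set0 /\ F != convA A]].

Definition ratios (m n : nat) (N : 'cV[R]_m -> R) (A : 'M[R]_(m, n)) : set R :=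
  [set r | exists u x, [/\ convA A u, @simplex n x, ~ Zset A u x &
             r = 2 * N (A *m x - u) / distZ A u x]].

Definition is_max (S : set R) (a : R) : Prop := S a /\ forall b, S b -> b <= a.
Definition is_min (S : set R) (a : R) : Prop := S a /\ forall b, S b -> a <= b.

End Defs.
Arguments simplex {R} n.

(* Main.v *)
Set Warnings "-notation-overridden,-ambiguous-paths,-deprecated,-notation-incompatible-prefix".
Require Import Defs.
From mathcomp Require Import all_boot all_order all_algebra.
From mathcomp Require Import boolp classical_sets reals.
From mathcomp Require Import topology normedtype derive.
From mathcomp Require Import ring lra.
Import numFieldNormedType.Exports.
Set Implicit Arguments. Unset Strict Implicit. Unset Printing Implicit Defensive.
Import Order.TTheory GRing.Theory Num.Theory.
Local Open Scope ring_scope.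
Local Open Scope classical_set_scope.
Section Topo.
Variable R : realType.

Lemma entry_le k (v : 'rV[R]_k) i : `|v 0 i| <= `|v|.
Proof.
rewrite (_ : `|v| = mx_norm v) // mx_normrE; apply/bigmax_geP; right => /=.
by exists (0, i).
Qed.

Lemma norm_le_entries k (v : 'rV[R]_k) M : 0 <= M -> (forall i, `|v 0 i| <= M) -> `|v| <= M.
Proof.
move=> M0 H; rewrite (_ : `|v| = mx_norm v) // mx_normrE.
apply/bigmax_leP; split => // -[i j] _ /=.
by rewrite (ord1 i); apply: H.
Qed.

Lemma lip_cont k (f : 'rV[R]_k -> R) (L : R) :
  (forall a b, `|f a - f b| <= L * `|a - b|) -> continuous f.
Proof.
move=> Hf x; apply/(@cvgrPdist_lt _ _ _ _ (nbhs_filter x)) => e e0.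
have L1 : 0 < `|L| + 1 by rewrite ltr_wpDl.
have ed : 0 < e / (`|L| + 1) by rewrite divr_gt0.
have := @near_ball _ _ x _ ed.
apply: filterS => y; rewrite -ball_normE /= => Hy.
apply: (le_lt_trans (Hf x y)).
apply: (le_lt_trans (y := (`|L| + 1) * `|x - y|)).
  apply: ler_wpM2r => //. by rewrite (le_trans (ler_norm L)) // lerDl.
by rewrite mulrC -ltr_pdivlMr.
Qed.

Lemma lin_lip k (c : 'I_k -> R) (a b : 'rV[R]_k) :
  `|\sum_i c i * a 0 i - \sum_i c i * b 0 i| <= (\sum_i `|c i|) * `|a - b|.
Proof.
rewrite -sumrB big_distrl /=; apply: (le_trans (ler_norm_sum _ _ _)).
apply: ler_sum => i _; rewrite -mulrBr normrM; apply: ler_wpM2l => //.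
by have := entry_le (a - b) i; rewrite !mxE.
Qed.

Lemma closed_lin_le k (c : 'I_k -> R) (b : R) :
  closed [set v : 'rV[R]_k | \sum_i c i * v 0 i <= b].
Proof.
have -> : [set v : 'rV[R]_k | \sum_i c i * v 0 i <= b] =
  (fun v : 'rV[R]_k => \sum_i c i * v 0 i) @^-1` [set x | x <= b] by [].
apply: preimage_closed; last exact: closed_le.
move=> x _; exact: (lip_cont (@lin_lip k c)).
Qed.

Lemma closed_lin_ge k (c : 'I_k -> R) (b : R) :
  closed [set v : 'rV[R]_k | b <= \sum_i c i * v 0 i].
Proof.
have -> : [set v : 'rV[R]_k | b <= \sum_i c i * v 0 i] =
  (fun v : 'rV[R]_k => \sum_i c i * v 0 i) @^-1` [set x | b <= x] by [].
apply: preimage_closed; last exact: closed_ge.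
move=> x _; exact: (lip_cont (@lin_lip k c)).
Qed.

Lemma closed_lin_eq k (c : 'I_k -> R) (b : R) :
  closed [set v : 'rV[R]_k | \sum_i c i * v 0 i = b].
Proof.
have -> : [set v : 'rV[R]_k | \sum_i c i * v 0 i = b] =
  (fun v : 'rV[R]_k => \sum_i c i * v 0 i) @^-1` [set x | x = b] by [].
apply: preimage_closed; last exact: closed_eq.
move=> x _; exact: (lip_cont (@lin_lip k c)).
Qed.

Lemma EVT_K k (K : set 'rV[R]_k) (f : 'rV[R]_k -> R) (L M : R) :
  K !=set0 -> closed K -> (forall v, K v -> forall i, `|v 0 i| <= M) ->
  (forall a b, `|f a - f b| <= L * `|a - b|) ->
  exists c, K c /\ forall t, K t -> f c <= f t.
Proof.
move=> K0 Kc KM Hf.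
have cK : compact K.
  apply: bounded_closed_compact => //.
  exists (`|M|); split; first by rewrite realE normr_ge0.
  move=> r Mr v Kv; apply: norm_le_entries.
    by apply: le_trans (ltW Mr).
  move=> i; apply: (le_trans (KM v Kv i)); apply: le_trans (ltW Mr).
  exact: ler_norm.
have cf : {within K, continuous f}.
  apply: continuous_subspaceT; exact: (lip_cont Hf).
have [c cK' Hc] := EVT_min_rV K0 cK cf.
exists c; split; first by rewrite inE in cK'.
by move=> t Kt; apply: Hc; rewrite inE.
Qed.

End Topo.
Section Basic.
Variable R : realType.
Variables (m n : nat) (N : 'cV[R]_m -> R) (A : 'M[R]_(m, n)).
Hypothesis hN : is_norm N.

Lemma NZ c x : N (c *: x) = `|c| * N x.
Proof. by case: hN => _ H _; apply: H. Qed.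

Lemma Ntri x y : N (x + y) <= N x + N y.
Proof. by case: hN => _ _ H; apply: H. Qed.

Lemma Neq0 x : N x = 0 -> x = 0.
Proof. by case: hN => H _ _; apply: H. Qed.

Lemma N0 : N 0 = 0.
Proof. by rewrite -(scale0r 0) NZ normr0 mul0r. Qed.

Lemma NN x : N (- x) = N x.
Proof. by rewrite -scaleN1r NZ normrN normr1 mul1r. Qed.

Lemma NB x y : N (x - y) = N (y - x).
Proof. by rewrite -NN opprB. Qed.

Lemma N_ge0 x : 0 <= N x.
Proof.
have := Ntri x (- x); rewrite subrr N0 NN.
by move=> H; lra.
Qed.

Lemma N_sum (I : Type) (r : seq I) (P : pred I) (F : I -> 'cV[R]_m) :
  N (\sum_(i <- r | P i) F i) <= \sum_(i <- r | P i) N (F i).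
Proof.
elim/big_rec2: _ => [|i y1 y2 _ H]; first by rewrite N0.
by apply: le_trans (Ntri _ _) _; rewrite lerD2l.
Qed.

Lemma mulmx_sum (x : 'cV[R]_n) : A *m x = \sum_j x j 0 *: col j A.
Proof.
apply/matrixP => i k; rewrite !mxE summxE; apply: eq_bigr => j _.
by rewrite !mxE (ord1 k) mulrC.
Qed.

Definition ev (j : 'I_n) : 'cV[R]_n := delta_mx j 0.

Lemma col_ev j : col j A = A *m ev j.
Proof.
rewrite mulmx_sum (bigD1 j) //= big1 ?addr0.
  by rewrite /ev mxE !eqxx scale1r.
by move=> i /negbTE ij; rewrite /ev mxE ij /= scale0r.
Qed.

Lemma ev_simplex j : simplex n (ev j).
Proof.
split; first by move=> i; rewrite /ev mxE; case: (_ == _).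
rewrite (bigD1 j) //= big1 ?addr0; first by rewrite /ev mxE !eqxx.
by move=> i /negbTE ij; rewrite /ev mxE ij.
Qed.

Lemma l1_ge0 (x : 'cV[R]_n) : 0 <= l1 x.
Proof. by apply: sumr_ge0 => i _. Qed.

Lemma l1_eq0 (x : 'cV[R]_n) : l1 x = 0 -> x = 0.
Proof.
move=> /eqP; rewrite /l1 psumr_eq0 // => /allP H.
apply/matrixP => i j; rewrite (ord1 j) mxE.
by apply/eqP; rewrite -normr_eq0; apply/eqP/eqP/H; rewrite mem_index_enum.
Qed.

Definition diam := diamA N A.

Lemma diam_ge i j : N (col i A - col j A) <= diam.
Proof.
rewrite /diam /diamA.
apply: le_trans (le_bigmax _ _ i).
exact: (le_bigmax _ (fun j => N (col i A - col j A)) j).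
Qed.

Lemma diam_ge0 : 0 <= diam.
Proof.
rewrite /diam /diamA.
by apply: bigmax_ge_id.
Qed.


Lemma maxpm (r : R) : r = Num.max r 0 - Num.max (- r) 0.
Proof.
case: (leP 0 r) => h.
  by rewrite max_r ?subr0 // oppr_le0.
by rewrite max_l ?sub0r ?opprK // oppr_ge0 ltW.
Qed.

Lemma maxpm_abs (r : R) : `|r| = Num.max r 0 + Num.max (- r) 0.
Proof.
case: (leP 0 r) => h.
  by rewrite max_r ?addr0 ?ger0_norm // oppr_le0.
by rewrite max_l ?add0r ?ltr0_norm // oppr_ge0 ltW.
Qed.

Lemma max0_ge0 (r : R) : 0 <= Num.max r 0.
Proof. by rewrite le_max lexx orbT. Qed.

Lemma U (x z : 'cV[R]_n) : \sum_i x i 0 = \sum_i z i 0 ->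
  2 * N (A *m (x - z)) <= diam * l1 (x - z).
Proof.
move=> sxz.
set w := x - z.
have sw : \sum_i w i 0 = 0.
  rewrite (eq_bigr (fun i => x i 0 - z i 0)); last by move=> i _; rewrite !mxE.
  by rewrite sumrB sxz subrr.
pose wp i := Num.max (w i 0) 0; pose wm i := Num.max (- w i 0) 0.
have wpm i : w i 0 = wp i - wm i by apply: maxpm.
have wp0 i : 0 <= wp i by apply: max0_ge0.
have wm0 i : 0 <= wm i by apply: max0_ge0.
have sp : \sum_i wm i = \sum_i wp i.
  have : \sum_i (wp i - wm i) = 0.
    by rewrite -[RHS]sw; apply: eq_bigr => i _; rewrite wpm.
  by rewrite sumrB => /eqP; rewrite subr_eq0 => /eqP ->.
set s := \sum_i wp i.
have s0 : 0 <= s by apply: sumr_ge0.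
have l1w : l1 w = s + s.
  rewrite /l1 (eq_bigr (fun i => wp i + wm i)); last by move=> i _; apply: maxpm_abs.
  by rewrite big_split /= sp.
have key : s *: (A *m w) = \sum_i \sum_j (wp i * wm j) *: (col i A - col j A).
  rewrite mulmx_sum scaler_sumr.
  transitivity (\sum_i (wp i * s) *: col i A - \sum_i (s * wm i) *: col i A).
    rewrite -sumrB; apply: eq_bigr => i _.
    by rewrite scalerA wpm -scalerBl mulrBr mulrC.
  rewrite [RHS](eq_bigr (fun i => \sum_j (wp i * wm j) *: col i A -
                               \sum_j (wp i * wm j) *: col j A)); last first.
    by move=> i _; rewrite -sumrB; apply: eq_bigr => j _; rewrite scalerBr.
  rewrite sumrB; congr (_ - _).
    by apply: eq_bigr => i _; rewrite -scaler_suml -mulr_sumr sp.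
  rewrite exchange_big; apply: eq_bigr => j _.
  by rewrite -scaler_suml -mulr_suml.
have bnd : s * N (A *m w) <= s * (s * diam).
  rewrite -{1}(ger0_norm s0) -NZ key.
  apply: le_trans (N_sum _ _ _) _.
  apply: (@le_trans _ _ (\sum_i \sum_j wp i * wm j * diam)).
    apply: ler_sum => i _; apply: le_trans (N_sum _ _ _) _.
    apply: ler_sum => j _; rewrite NZ ger0_norm ?mulr_ge0 //.
    by apply: ler_wpM2l; [apply: mulr_ge0|apply: diam_ge].
  rewrite mulr_suml; apply: ler_sum => i _.
  by rewrite -mulr_suml -mulr_sumr sp mulrA.
have dg := diam_ge0.
case: (eqVneq s 0) => [s00|sn0].
  have wp00 i : wp i = 0.
    by move/eqP: s00; rewrite psumr_eq0 // => /allP/(_ i (mem_index_enum _))/eqP.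
  have wm00 i : wm i = 0.
    have s01 : \sum_i wm i = 0 by rewrite sp.
    by move/eqP: s01; rewrite psumr_eq0 // => /allP/(_ i (mem_index_enum _))/eqP.
  have -> : w = 0.
    by apply/matrixP => i j; rewrite (ord1 j) wpm wp00 wm00 subrr mxE.
  by rewrite mulmx0 N0 mulr0 mulr_ge0 // l1_ge0.
have sp0 : 0 < s by rewrite lt_def sn0 s0.
rewrite ler_pM2l // in bnd.
rewrite l1w; nra.
Qed.

Lemma simplex_sum (x : 'cV[R]_n) : simplex n x -> \sum_i x i 0 = 1.
Proof. by case. Qed.

Lemma l1_le2 (x z : 'cV[R]_n) : simplex n x -> simplex n z -> l1 (x - z) <= 2.
Proof.
move=> [x0 sx] [z0 sz].
apply: (@le_trans _ _ (\sum_i (x i 0 + z i 0))).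
  apply: ler_sum => i _; have := x0 i; have := z0 i.
  rewrite !mxE ler_norml => h1 h2; apply/andP; split; lra.
by rewrite big_split /= sx sz.
Qed.

Lemma distZ_lb u (x : 'cV[R]_n) (c : R) :
  (exists z, Zset A u z) -> (forall z, Zset A u z -> c <= l1 (x - z)) ->
  c <= distZ A u x.
Proof.
move=> [z0 Hz0] H; apply: lb_le_inf.
  by exists (l1 (x - z0)), z0.
by move=> r [z Hz <-]; apply: H.
Qed.

Lemma inf_le_nn (E : set R) x : (forall y, E y -> 0 <= y) -> E x -> inf E <= x.
Proof. by move=> H Ex; apply: ge_inf => //; exists 0 => y /H. Qed.

Lemma inf_ge_nn (E : set R) c : E !=set0 -> (forall y, E y -> c <= y) -> c <= inf E.
Proof. by move=> E0 H; apply: lb_le_inf. Qed.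

Lemma inf_ge0_nn (E : set R) : (forall y, E y -> 0 <= y) -> 0 <= inf E.
Proof.
move=> H; case: (pselect (E !=set0)) => [E0|E0]; first exact: inf_ge_nn.
have -> : E = set0 by apply/seteqP; split=> y //= Ey; apply: E0; exists y.
by rewrite inf0.
Qed.

Lemma distZ_ub u (x z : 'cV[R]_n) : Zset A u z -> distZ A u x <= l1 (x - z).
Proof.
move=> Hz; apply: inf_le_nn; last by exists z.
by move=> r [z' _ <-]; apply: l1_ge0.
Qed.

Lemma distZ_ge0 u (x : 'cV[R]_n) : (exists z, Zset A u z) -> 0 <= distZ A u x.
Proof. by move=> H; apply: distZ_lb => // z _; apply: l1_ge0. Qed.

Lemma ratio_le_diam r : ratios N A r -> r <= diam.
Proof.
move=> [u [x [[y Hy <-] Hx Hnot ->]]].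
have Zy : Zset A (A *m y) y by [].
have exZ : exists z, Zset A (A *m y) z by exists y.
set d := distZ A (A *m y) x.
have d0 : 0 <= d by apply: distZ_ge0.
have dg := diam_ge0.
have UU z : Zset A (A *m y) z -> 2 * N (A *m x - A *m y) <= diam * l1 (x - z).
  move=> [Hz <-]; rewrite -mulmxBr; apply: U.
  by rewrite !simplex_sum.
case: (eqVneq d 0) => [->|dn0]; first by rewrite invr0 mulr0.
have dp : 0 < d by rewrite lt_def dn0 d0.
rewrite ler_pdivrMr //.
case: (eqVneq diam 0) => [D0|Dn0].
  by have := UU y Zy; rewrite D0 !mul0r.
have Dp : 0 < diam by rewrite lt_def Dn0 dg.
have H : 2 * N (A *m x - A *m y) / diam <= d.
  apply: distZ_lb => // z Hz.
  by rewrite ler_pdivrMr // [leRHS]mulrC; apply: UU.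
by move: H; rewrite ler_pdivrMr // [leRHS]mulrC.
Qed.

Lemma bigmax_attained (I : finType) (i0 : I) (F : I -> R) :
  (forall i, 0 <= F i) -> exists i, \big[Num.max/0]_(j : I) F j = F i.
Proof.
move=> H; exists [arg max_(i > i0) F i]%O.
by apply: (@bigmax_eq_arg _ _ _ 0 i0 xpredT F).
Qed.

Lemma diam_attained (i0 : 'I_n) : exists i j, diam = N (col i A - col j A).
Proof.
have [i Hi] := @bigmax_attained _ i0
  (fun i => \big[Num.max/0]_(j < n) N (col i A - col j A))
  (fun i => bigmax_ge_id _ _ _ _).
have [j Hj] := @bigmax_attained _ i0 (fun j => N (col i A - col j A))
  (fun j => N_ge0 _).
by exists i, j; rewrite /diam /diamA Hi Hj.
Qed.

Lemma diam_in_ratios : (exists i j : 'I_n, col i A != col j A) -> ratios N A diam.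
Proof.
move=> [i0 [j0 Hij0]].
have [i [j Dij]] := diam_attained i0.
have Dp : 0 < diam.
  apply: lt_le_trans (diam_ge i0 j0).
  rewrite lt_def N_ge0 andbT; apply/eqP => /Neq0/eqP.
  by rewrite subr_eq0 (negbTE Hij0).
have nij : col i A != col j A.
  apply/eqP => e; move: Dp; rewrite Dij e subrr N0 ltxx //.
exists (col j A), (ev i); split.
- by exists (ev j); [apply: ev_simplex| rewrite col_ev].
- exact: ev_simplex.
- by move=> [_]; rewrite -col_ev => /eqP; rewrite (negbTE nij).
have exZ : exists z, Zset A (col j A) z.
  by exists (ev j); split; [apply: ev_simplex|rewrite col_ev].
have d2 : distZ A (col j A) (ev i) = 2.
  apply/eqP; rewrite eq_le; apply/andP; split.
    have Zj : Zset A (col j A) (ev j) by split; [apply: ev_simplex|rewrite col_ev].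
    apply: le_trans (distZ_ub (ev i) Zj) _; apply: l1_le2; apply: ev_simplex.
  apply: distZ_lb => // z [Hz Az].
  have := @U (ev i) z (etrans (simplex_sum (ev_simplex i)) (esym (simplex_sum Hz))).
  rewrite mulmxBr Az -col_ev -Dij.
  by rewrite mulrC ler_pM2l.
by rewrite d2 -col_ev -Dij; field.
Qed.

Lemma ev_entry (j k : 'I_n) : ev j k 0 = (k == j)%:R.
Proof. by rewrite /ev mxE eqxx andbT. Qed.

Lemma simplex_comb (y1 y2 : 'cV[R]_n) t : simplex n y1 -> simplex n y2 -> 0 <= t <= 1 ->
  simplex n (t *: y1 + (1 - t) *: y2).
Proof.
move=> [p1 s1] [p2 s2] /andP[t0 t1]; split.
  move=> i; rewrite !mxE; apply: addr_ge0; apply: mulr_ge0 => //.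
  by rewrite subr_ge0.
rewrite (eq_bigr (fun i => t * y1 i 0 + (1 - t) * y2 i 0)); last by move=> i _; rewrite !mxE.
by rewrite big_split /= -!mulr_sumr s1 s2 !mulr1 addrC subrK.
Qed.

Lemma convA_convex : convex_set (convA A).
Proof.
move=> _ _ t [y1 H1 <-] [y2 H2 <-] Ht.
exists (t *: y1 + (1 - t) *: y2); first exact: simplex_comb.
by rewrite mulmxDr !scalemxAr.
Qed.

Lemma simplex_pos (z : 'cV[R]_n) : simplex n z -> exists j, 0 < z j 0.
Proof.
move=> [z0 sz]; apply: contrapT => H.
have : \sum_i z i 0 <= 0.
  apply: sumr_le0 => i _; rewrite leNgt; apply/negP => h; apply: H; by exists i.
by rewrite sz ler10.
Qed.

Lemma simplex_one (z : 'cV[R]_n) j : simplex n z -> z j 0 = 1 -> z = ev j.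
Proof.
move=> [z0 sz] zj.
have H : \sum_(k | k != j) z k 0 = 0.
  by move: sz; rewrite (bigD1 j) //= zj; lra.
move/eqP: H; rewrite psumr_eq0 //= => /allP H.
apply/matrixP => k l; rewrite (ord1 l) ev_entry.
case: (eqVneq k j) => [->|kj]; first by rewrite zj.
by have := H k (mem_index_enum _); rewrite kj /= => /eqP ->.
Qed.

Lemma simplex_split (z : 'cV[R]_n) j : simplex n z -> 0 < z j 0 < 1 ->
  exists z', [/\ simplex n z', z' j 0 = 0, (forall k, 0 < z' k 0 -> 0 < z k 0) &
     z = z j 0 *: ev j + (1 - z j 0) *: z'].
Proof.
move=> [z0 sz] /andP[zj0 zj1].
have nz : 1 - z j 0 != 0 by rewrite subr_eq0 eq_sym lt_eqF.
have pz : 0 < (1 - z j 0)^-1 by rewrite invr_gt0 subr_gt0.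
set c := z j 0.
exists ((1 - c)^-1 *: (z - c *: ev j)).
have E k : ((1 - c)^-1 *: (z - c *: ev j)) k 0 = (1 - c)^-1 * (z k 0 - c * (k == j)%:R).
  by rewrite !mxE ?eqxx ?andbT.
split.
- split.
    move=> k; rewrite E; apply: mulr_ge0; first exact: ltW.
    by case: (eqVneq k j) => [->|kj]; rewrite /= ?mulr1 ?subrr // mulr0 subr0.
  rewrite (eq_bigr _ (fun k _ => E k)) -mulr_sumr sumrB -mulr_sumr sz.
  rewrite (bigD1 j) //= eqxx big1 ?addr0; last by move=> k /negbTE ->.
  by rewrite mulr1 mulVf.
- by rewrite E eqxx mulr1 subrr mulr0.
- move=> k; rewrite E; case: (eqVneq k j) => [->|kj] //=.
  by rewrite mulr0 subr0 pmulr_rgt0.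
- apply/matrixP => k l; rewrite (ord1 l) !mxE ?eqxx ?andbT.
  rewrite [X in _ = _ + X]mulrA mulfV // mul1r.
  by rewrite addrCA subrr addr0.
Qed.

Lemma A_split (z z' : 'cV[R]_n) j c : z = c *: ev j + (1 - c) *: z' ->
  A *m z = c *: col j A + (1 - c) *: (A *m z').
Proof. by move=> ->; rewrite mulmxDr -!scalemxAr -col_ev. Qed.

Lemma supp_face F (z : 'cV[R]_n) j : is_face (convA A) F -> simplex n z ->
  F (A *m z) -> 0 < z j 0 -> F (col j A).
Proof.
move=> [FC Fc Fe] Hz Fz zj.
have zj1 : z j 0 <= 1.
  have [z0 sz] := Hz; rewrite -sz (bigD1 j) //= lerDl.
  by apply: sumr_ge0 => k _; exact: z0.
case: (eqVneq (z j 0) 1) => [e|ne].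
  by move: Fz; rewrite (simplex_one Hz e) -col_ev.
have zj1' : z j 0 < 1 by rewrite lt_def eq_sym ne zj1.
have [z' [Hz' _ _ ez]] := simplex_split Hz (introT andP (conj zj zj1')).
have := Fe (col j A) (A *m z') (z j 0).
rewrite -(A_split ez) => /(_ _ _ _ Fz) [] //.
- by exists (ev j); [apply: ev_simplex|rewrite col_ev].
- by exists z'.
- by rewrite zj zj1'.
Qed.

Lemma conv_in_F (F : set 'cV[R]_m) (z : 'cV[R]_n) : convex_set F -> simplex n z ->
  (forall j, 0 < z j 0 -> F (col j A)) -> F (A *m z).
Proof.
move=> Fc Hz0 Hcol0.
suff H : forall c (z : 'cV[R]_n), leq #|[set k | 0 < z k 0]%SET| c -> simplex n z ->
  (forall j, 0 < z j 0 -> F (col j A)) -> F (A *m z).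
  exact: (H _ z (leqnn _)).
clear Hz0 Hcol0; elim => [|c IH] {}z Hc Hz Hcol.
  have [j zj] := simplex_pos Hz.
  have : leq 1 #|[set k | 0 < z k 0]%SET| by apply/card_gt0P; exists j; rewrite inE.
  by rewrite leqn0 in Hc; rewrite (eqP Hc).
have [j zj] := simplex_pos Hz.
have zj1 : z j 0 <= 1.
  have [z0 sz] := Hz; rewrite -sz (bigD1 j) //= lerDl.
  by apply: sumr_ge0 => k _; exact: z0.
case: (eqVneq (z j 0) 1) => [e|ne].
  by rewrite (simplex_one Hz e) -col_ev; apply: Hcol.
have zj1' : z j 0 < 1 by rewrite lt_def eq_sym ne zj1.
have [z' [Hz' z'j Hsub ez]] := simplex_split Hz (introT andP (conj zj zj1')).
rewrite (A_split ez); apply: Fc; last by rewrite (ltW zj) zj1.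
  by apply: Hcol.
apply: IH => //; last by move=> k /Hsub; apply: Hcol.
rewrite -ltnS; apply: leq_trans Hc.
apply: (@proper_card _ [set k | 0 < z' k 0]%SET [set k | 0 < z k 0]%SET).
apply/properP; split.
  by apply/fintype.subsetP => k; rewrite !inE => /Hsub.
by exists j; rewrite !inE // z'j ltxx.
Qed.

Lemma closed_all k (I : Type) (P : I -> set 'rV[R]_k) :
  (forall i, closed (P i)) -> closed [set v | forall i, P i v].
Proof.
move=> H.
have -> : [set v | forall i, P i v] = \bigcap_(i in [set: I]) P i.
  by apply/seteqP; split => v /= Hv i //; apply: Hv.
by apply: closed_bigI => i _; apply: H.
Qed.

Lemma closed_coord_ge k (i : 'I_k) : closed [set v : 'rV[R]_k | 0 <= v 0 i].
Proof.
have -> : [set v : 'rV[R]_k | 0 <= v 0 i] =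
  [set v | 0 <= \sum_l (l == i)%:R * v 0 l].
  apply/seteqP; split => v /=; rewrite (bigD1 i) //= eqxx mul1r big1 ?addr0 //;
  by move=> l /negbTE ->; rewrite mul0r.
exact: closed_lin_ge.
Qed.

Lemma closed_coord_eq0 k (i : 'I_k) : closed [set v : 'rV[R]_k | v 0 i = 0].
Proof.
have -> : [set v : 'rV[R]_k | v 0 i = 0] =
  [set v | \sum_l (l == i)%:R * v 0 l = 0].
  apply/seteqP; split => v /=; rewrite (bigD1 i) //= eqxx mul1r big1 ?addr0 //;
  by move=> l /negbTE ->; rewrite mul0r.
exact: closed_lin_eq.
Qed.

Lemma l1_lip (x : 'cV[R]_n) (a b : 'rV[R]_n) :
  `|l1 (x - a^T) - l1 (x - b^T)| <= n%:R * `|a - b|.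
Proof.
rewrite /l1 -sumrB; apply: le_trans (ler_norm_sum _ _ _) _.
apply: (@le_trans _ _ (\sum_(i < n) `|a - b|)); last first.
  by rewrite sumr_const card_ord mulr_natl.
apply: ler_sum => i _; rewrite !mxE.
apply: le_trans (ler_dist_dist _ _) _.
rewrite (_ : x i 0 - a 0 i - (x i 0 - b 0 i) = - (a 0 i - b 0 i)); last by ring.
by rewrite normrN; have := entry_le (a - b) i; rewrite !mxE.
Qed.

Lemma Zset_min u (x : 'cV[R]_n) : (exists z, Zset A u z) ->
  exists z, Zset A u z /\ forall z', Zset A u z' -> l1 (x - z) <= l1 (x - z').
Proof.
move=> [y Hy].
pose K := [set v : 'rV[R]_n | forall i, 0 <= v 0 i] `&`
          [set v | \sum_i 1 * v 0 i = 1] `&`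
          [set v | forall r : 'I_m, \sum_i A r i * v 0 i = u r 0].
have KZ v : K v <-> Zset A u v^T.
  split.
    move=> [[H1 H2] H3]; split; first split.
    - by move=> i; rewrite mxE.
    - by rewrite -H2; apply: eq_bigr => i _; rewrite mxE mul1r.
    apply/matrixP => r l; rewrite (ord1 l) -H3 mxE; apply: eq_bigr => i _.
    by rewrite mxE.
  move=> [[H1 H2] H3]; split; first split.
  - by move=> i; have := H1 i; rewrite mxE.
  - by apply: (etrans _ H2); apply: eq_bigr => i _; rewrite mul1r mxE.
  move=> r; rewrite -H3 mxE; apply: eq_bigr => i _; by rewrite mxE.
have K0 : K !=set0 by exists y^T; apply/KZ; rewrite trmxK.
have Kc : closed K.
  apply: closedI; first apply: closedI.
  - by apply: closed_all => i; apply: closed_coord_ge.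
  - exact: closed_lin_eq.
  - by apply: closed_all => r; apply: closed_lin_eq.
have KM v : K v -> forall i, `|v 0 i| <= 1.
  move=> /KZ [[H1 H2] _] i; have := H1 i; rewrite mxE => h.
  rewrite ger0_norm // -H2 (bigD1 i) //= mxE lerDl.
  by apply: sumr_ge0 => l _; have := H1 l; rewrite mxE.
have [c [Kc' Hc]] := @EVT_K _ _ K (fun v => l1 (x - v^T)) n%:R 1 K0 Kc KM (l1_lip x).
exists c^T; split; first by apply/KZ.
move=> z' Hz'; have := Hc z'^T; rewrite trmxK; apply.
by apply/KZ; rewrite trmxK.
Qed.

Lemma shrink (c v : 'cV[R]_m) e1 e : convA A c -> convA A (c + e1 *: (c - v)) ->
  0 < e -> e <= e1 -> convA A (c + e *: (c - v)).
Proof.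
move=> Cc C1 e0 ee1.
have e10 : 0 < e1 by apply: lt_le_trans ee1.
have -> : c + e *: (c - v) = (e / e1) *: (c + e1 *: (c - v)) + (1 - e / e1) *: c.
  apply/matrixP => i j; rewrite !mxE; field; exact: lt0r_neq0.
apply: convA_convex => //.
apply/andP; split; first by rewrite divr_ge0 // ltW.
by rewrite ler_pdivrMr // mul1r.
Qed.

Lemma face_ext (c x' y' : 'cV[R]_m) t e : convA A x' -> convA A y' -> 0 < t < 1 -> 0 < e ->
  convA A (c + e *: (c - (t *: x' + (1 - t) *: y'))) ->
  exists2 d, 0 < d & convA A (c + d *: (c - x')).
Proof.
move=> Cx Cy /andP[t0 t1] e0 CY.
have et : 0 <= e * (1 - t) by apply: mulr_ge0; lra.
have D0 : 0 < 1 + e * (1 - t) by lra.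
exists (t * e / (1 + e * (1 - t))); first by rewrite divr_gt0 // mulr_gt0.
have -> : c + (t * e / (1 + e * (1 - t))) *: (c - x') =
  (1 + e * (1 - t))^-1 *: (c + e *: (c - (t *: x' + (1 - t) *: y'))) +
  (1 - (1 + e * (1 - t))^-1) *: y'.
  apply/matrixP => i j; rewrite !mxE; field; exact: lt0r_neq0.
apply: convA_convex => //.
apply/andP; split; first by rewrite invr_ge0 ltW.
by rewrite invf_le1 // lerDl.
Qed.

Definition Fc (c : 'cV[R]_m) : set 'cV[R]_m :=
  [set v | convA A v /\ exists2 e, 0 < e & convA A (c + e *: (c - v))].

Lemma Fc_c c : convA A c -> Fc c c.
Proof. by move=> Cc; split => //; exists 1 => //; rewrite subrr scaler0 addr0. Qed.

Lemma Fc_face c : convA A c -> is_face (convA A) (Fc c).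
Proof.
move=> Cc; split.
- by move=> v [].
- move=> v1 v2 t [C1 [e1 e10 H1]] [C2 [e2 e20 H2]] Ht; split; first exact: convA_convex.
  have mp : 0 < Num.min e1 e2 by rewrite lt_min e10 e20.
  exists (Num.min e1 e2) => //.
  have m1 : Num.min e1 e2 <= e1 by rewrite ge_min lexx.
  have m2 : Num.min e1 e2 <= e2 by rewrite ge_min lexx orbT.
  have H1' := shrink Cc H1 mp m1.
  have H2' := shrink Cc H2 mp m2.
  set e := Num.min e1 e2.
  have -> : c + e *: (c - (t *: v1 + (1 - t) *: v2)) =
    t *: (c + e *: (c - v1)) + (1 - t) *: (c + e *: (c - v2)).
    by apply/matrixP => i j; rewrite !mxE; ring.
  exact: convA_convex.
- move=> x' y' t Cx Cy Ht [_ [e e0 He]]; split; split => //.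
    exact: face_ext He.
  have Ht' : 0 < 1 - t < 1.
    by case/andP: Ht => t0 t1; rewrite subr_gt0 t1 /= ltrBlDr ltrDl.
  apply: (face_ext (t := 1 - t) (e := e) Cy Cx Ht' e0).
  have E : (1 - t) *: y' + (1 - (1 - t)) *: x' = t *: x' + (1 - t) *: y'.
    by apply/matrixP => i j; rewrite !mxE; ring.
  by rewrite E.
Qed.

Lemma key_face u (x : 'cV[R]_n) : convA A u -> simplex n x -> ~ Zset A u x ->
  exists F v w, [/\ is_face (convA A) F, F !=set0, F != convA A, F v &
     conv_outside A F w /\ 2 * N (A *m x - u) / distZ A u x = N (v - w)].
Proof.
move=> [y Hy <-] Hx HnZ.
have exZ : exists z, Zset A (A *m y) z by exists y.
have [z [[Hz Az] zmin]] := Zset_min x exZ.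
have dE : distZ A (A *m y) x = l1 (x - z).
  apply/eqP; rewrite eq_le; apply/andP; split; first exact: distZ_ub.
  by apply: distZ_lb => // z' Hz'; apply: zmin.
pose wp k := Num.max (z k 0 - x k 0) 0.
pose wm k := Num.max (x k 0 - z k 0) 0.
have wp0 k : 0 <= wp k by apply: max0_ge0.
have wm0 k : 0 <= wm k by apply: max0_ge0.
have xz k : x k 0 - z k 0 = wm k - wp k.
  by rewrite {1}(maxpm (x k 0 - z k 0)) opprB.
have axz k : `|x k 0 - z k 0| = wm k + wp k.
  by rewrite (maxpm_abs (x k 0 - z k 0)) opprB.
have sp : \sum_k wm k = \sum_k wp k.
  have : \sum_k (wm k - wp k) = 0.
    rewrite -(eq_bigr _ (fun k _ => xz k)) sumrB (simplex_sum Hx) (simplex_sum Hz).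
    by rewrite subrr.
  by rewrite sumrB => /eqP; rewrite subr_eq0 => /eqP.
set s := \sum_k wp k.
have l1xz : l1 (x - z) = s + s.
  rewrite /l1 (eq_bigr (fun k => wm k + wp k)); last by move=> k _; rewrite !mxE axz.
  by rewrite big_split /= sp.
have s0 : 0 <= s by apply: sumr_ge0.
have sn0 : s != 0.
  apply/eqP => s00; apply: HnZ; split => //.
  have : l1 (x - z) = 0 by rewrite l1xz s00 addr0.
  by move/l1_eq0/eqP; rewrite subr_eq0 => /eqP ->.
have sp0 : 0 < s by rewrite lt_def sn0 s0.
pose q : 'cV[R]_n := s^-1 *: \col_k wp k.
pose p : 'cV[R]_n := s^-1 *: \col_k wm k.
have qE k : q k 0 = s^-1 * wp k by rewrite !mxE.
have pE k : p k 0 = s^-1 * wm k by rewrite !mxE.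
have Hq : simplex n q.
  split; first by move=> k; rewrite qE mulr_ge0 // invr_ge0 ltW.
  by rewrite (eq_bigr _ (fun k _ => qE k)) -mulr_sumr mulVf.
have Hp : simplex n p.
  split; first by move=> k; rewrite pE mulr_ge0 // invr_ge0 ltW.
  by rewrite (eq_bigr _ (fun k _ => pE k)) -mulr_sumr sp mulVf.
set c := A *m q.
have Cc : convA A c by exists q.
have K j : 0 < wm j -> ~ Fc c (col j A).
  move=> wmj [_ [e e0 [r Hr Ar]]].
  have e1 : 0 < 1 + e by rewrite ltr_wpDr // ltW.
  have [r' r'def] : {r' : 'cV[R]_n | r' = (1 + e)^-1 *: r + (1 - (1 + e)^-1) *: ev j}.
    by eexists.
  have Hr' : simplex n r'.
    rewrite r'def; apply: simplex_comb => //; first exact: ev_simplex.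
    apply/andP; split; first by rewrite invr_ge0 ltW.
    by rewrite invf_le1 // lerDl ltW.
  have Ar' : A *m r' = c.
    rewrite r'def mulmxDr -!scalemxAr Ar -col_ev.
    apply/matrixP => i l; rewrite !mxE; field; exact: lt0r_neq0.
  have [z' z'def] : {z' : 'cV[R]_n | z' = z + s *: (r' - q)} by eexists.
  have z'E k : z' k 0 = z k 0 + s * r' k 0 - wp k.
    by rewrite z'def !mxE mulrBr [s * (s^-1 * _)]mulrA mulfV // mul1r addrA.
  have Hz' : Zset A (A *m y) z'.
    split; last by rewrite z'def mulmxDr -scalemxAr mulmxBr Ar' subrr scaler0 addr0.
    split.
      move=> k; rewrite z'E.
      have : 0 <= z k 0 - wp k.
        rewrite /wp; case: (leP (z k 0 - x k 0) 0) => h.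
          by rewrite subr0; case: Hz => z0 _; apply: z0.
        by rewrite opprB addrC subrK; case: Hx => x0 _; apply: x0.
      have : 0 <= s * r' k 0 by rewrite mulr_ge0 //; case: Hr' => r0 _; apply: r0.
      lra.
    rewrite (eq_bigr (fun k => z k 0 + (s * r' k 0 - s * q k 0))); last first.
      by move=> k _; apply: (etrans (z'E k)); rewrite qE mulrA mulfV // mul1r addrA.
    rewrite big_split /= sumrB -!mulr_sumr !simplex_sum //.
    by rewrite subrr addr0.
  have := zmin z' Hz'.
  have -> : l1 (x - z') = \sum_k `|wm k - s * r' k 0|.
    apply: eq_bigr => k _; rewrite !mxE z'E.
    congr (`|_|); have := xz k; lra.
  have r'j : 0 < r' j 0.
    rewrite r'def !mxE eqxx mulr1.
    have : 0 <= (1 + e)^-1 * r j 0.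
      by apply: mulr_ge0; [rewrite invr_ge0 ltW | case: Hr => r0 _; apply: r0].
    have : (1 + e)^-1 < 1 by rewrite invf_lt1 // ltrDl.
    lra.
  have lt : \sum_k `|wm k - s * r' k 0| < \sum_k (wm k + s * r' k 0).
    rewrite (bigD1 j) //= [X in _ < X](bigD1 j) //=.
    apply: ltr_leD.
      rewrite ltr_norml; apply/andP; split.
        have : 0 < s * r' j 0 by rewrite mulr_gt0.
        lra.
      have : 0 < s * r' j 0 by rewrite mulr_gt0.
      lra.
    apply: ler_sum => k _.
    have : 0 <= s * r' k 0 by rewrite mulr_ge0 //; case: Hr' => r0 _; apply: r0.
    rewrite ler_norml; move: (wm0 k) => h1 h2; apply/andP; split; lra.
  move: lt; rewrite big_split /= -mulr_sumr (simplex_sum Hr') mulr1 sp -l1xz.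
  by move=> lt le; have := lt_le_trans lt le; rewrite ltxx.
have [j pj] := simplex_pos Hp.
have wmj : 0 < wm j by move: pj; rewrite pE pmulr_rgt0 // invr_gt0.
exists (Fc c), c, (A *m p); split.
- exact: Fc_face.
- by exists c; apply: Fc_c.
- apply/eqP => E; apply: (K j wmj); rewrite E.
  by exists (ev j); [apply: ev_simplex|rewrite col_ev].
- exact: Fc_c.
split.
  exists p => //; split => // k Fk.
  rewrite pE; case: (eqVneq (wm k) 0) => [->|nk]; first by rewrite mulr0.
  by exfalso; apply: (K k _ Fk); rewrite lt_def nk wm0.
have -> : A *m x - A *m y = s *: (A *m p - c).
  rewrite -Az -mulmxBr -mulmxBr scalemxAr; congr (_ *m _).
  apply/matrixP => k l; rewrite (ord1 l) !mxE xz; field; exact: sn0.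
rewrite dE l1xz NZ ger0_norm // NB.
field; apply/eqP; lra.
Qed.

Lemma set_dist_ge0 F G : 0 <= set_dist N F G.
Proof. by apply: inf_ge0_nn => _ [a _ [b _ <-]]; apply: N_ge0. Qed.

Lemma set_dist_le F G a b : F a -> G b -> set_dist N F G <= N (a - b).
Proof.
move=> Fa Gb; apply: inf_le_nn; first by move=> _ [a' _ [b' _ <-]]; apply: N_ge0.
by exists a => //; exists b.
Qed.

Definition proper_face F := is_face (convA A) F /\ F !=set0 /\ F != convA A.

Lemma Phi_le F : proper_face F -> facial_dist N A <= set_dist N F (conv_outside A F).
Proof.
move=> HF; apply: inf_le_nn; first by move=> _ [F' _ <-]; apply: set_dist_ge0.
by exists F.
Qed.

Lemma ratio_ge_Phi r : ratios N A r -> facial_dist N A <= r.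
Proof.
move=> [u [x [Cu Hx HnZ ->]]].
have [F [v [w [Ff F0 Fne Fv [Cw ->]]]]] := key_face Cu Hx HnZ.
apply: le_trans (Phi_le _) (set_dist_le Fv Cw).
by split => //; split.
Qed.

Lemma face_ratio F (q p : 'cV[R]_n) : is_face (convA A) F -> simplex n q -> F (A *m q) ->
  simplex n p -> (forall j, F (col j A) -> p j 0 = 0) ->
  ratios N A (N (A *m q - A *m p)).
Proof.
move=> Ff Hq Fq Hp Hpz.
have l2 z : Zset A (A *m q) z -> l1 (p - z) = 2.
  move=> [Hz Az].
  rewrite /l1 (_ : 2 = \sum_j (p j 0 + z j 0)); last first.
    by rewrite big_split /= (simplex_sum Hp) (simplex_sum Hz).
  apply: eq_bigr => j _; rewrite !mxE.
  have z0 : 0 <= z j 0 by case: Hz.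
  have p0 : 0 <= p j 0 by case: Hp.
  case: (eqVneq (z j 0) 0) => [->|zn]; first by rewrite subr0 addr0 ger0_norm.
  have zp : 0 < z j 0 by rewrite lt_def zn z0.
  have -> : p j 0 = 0 by apply: Hpz; apply: supp_face Ff Hz _ zp; rewrite Az.
  by rewrite sub0r normrN add0r ger0_norm.
have Zq : Zset A (A *m q) q by [].
have d2 : distZ A (A *m q) p = 2.
  apply/eqP; rewrite eq_le; apply/andP; split.
    by rewrite -(l2 q Zq); apply: distZ_ub.
  by apply: distZ_lb; [exists q| move=> z /l2 ->].
exists (A *m q), p; split => //.
- by exists q.
- move=> /l2; rewrite subrr.
  have -> : l1 (0 : 'cV[R]_n) = 0 by rewrite /l1 big1 // => j _; rewrite mxE normr0.
  lra.
by rewrite d2 NB; field.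
Qed.

Definition Sof (F : set 'cV[R]_m) : {set 'I_n} := [set j | `[< F (col j A) >]]%SET.

Lemma SofE F j : (j \in Sof F) = `[< F (col j A) >].
Proof. by rewrite inE. Qed.

Definition KS (S : {set 'I_n}) : set 'rV[R]_n :=
  [set v | forall i, 0 <= v 0 i] `&` [set v | \sum_i (i \in S)%:R * v 0 i = 1] `&`
  [set v | \sum_i (i \notin S)%:R * v 0 i = 1].

Definition sgv (S : {set 'I_n}) (v : 'rV[R]_n) : 'cV[R]_n :=
  \col_i (if i \in S then v 0 i else - v 0 i).

Definition gS (S : {set 'I_n}) (v : 'rV[R]_n) : R := N (A *m sgv S v).

Definition mS S := inf [set gS S v | v in KS S].

Lemma N_lip a b : `|N a - N b| <= N (a - b).
Proof.
have h1 := Ntri b (a - b); have h2 := Ntri a (b - a).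
rewrite addrC subrK in h1; rewrite addrC subrK in h2.
rewrite -(NB a b) in h2.
rewrite ler_norml; apply/andP; split; lra.
Qed.

Lemma N_Aw (w : 'cV[R]_n) : N (A *m w) <= \sum_i `|w i 0| * N (col i A).
Proof.
rewrite mulmx_sum; apply: le_trans (N_sum _ _ _) _.
by apply: ler_sum => i _; rewrite NZ.
Qed.

Lemma gS_lip S a b : `|gS S a - gS S b| <= (\sum_i N (col i A)) * `|a - b|.
Proof.
apply: le_trans (N_lip _ _) _; rewrite -mulmxBr.
apply: le_trans (N_Aw _) _; rewrite mulr_suml; apply: ler_sum => i _.
rewrite mulrC; apply: ler_wpM2l; first exact: N_ge0.
have := entry_le (a - b) i; rewrite !mxE.
by case: (i \in S); rewrite // -opprD normrN.
Qed.

Lemma KS_closed S : closed (KS S).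
Proof.
apply: closedI; first apply: closedI.
- by apply: closed_all => i; apply: closed_coord_ge.
- exact: closed_lin_eq.
- exact: closed_lin_eq.
Qed.

Lemma KS_bnd S v : KS S v -> forall i, `|v 0 i| <= 2.
Proof.
move=> [[H0 H1] H2] i; rewrite ger0_norm //.
have e : \sum_i v 0 i = \sum_i (i \in S)%:R * v 0 i + \sum_i (i \notin S)%:R * v 0 i.
  rewrite -big_split; apply: eq_bigr => k _.
  by case: (k \in S); rewrite /= ?mul1r ?mul0r ?addr0 ?add0r.
rewrite H1 H2 in e.
have : v 0 i <= \sum_i v 0 i.
  by rewrite (bigD1 i) //= lerDl; apply: sumr_ge0 => k _; apply: H0.
lra.
Qed.

Lemma gS_ge0 S v : 0 <= gS S v.
Proof. exact: N_ge0. Qed.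

Lemma mS_le S v : KS S v -> mS S <= gS S v.
Proof.
move=> Kv; apply: inf_le_nn; last by exists v.
by move=> _ [v' _ <-]; apply: gS_ge0.
Qed.

Lemma mS_attained S : KS S !=set0 -> exists V, KS S V /\ gS S V = mS S.
Proof.
move=> K0.
have [c [Kc Hc]] := @EVT_K _ _ (KS S) (gS S) _ 2 K0 (@KS_closed S) (@KS_bnd S) (@gS_lip S).
exists c; split => //; apply/eqP; rewrite eq_le mS_le // andbT.
apply: inf_ge_nn; first by exists (gS S c), c.
by move=> _ [v Kv <-]; apply: Hc.
Qed.

Lemma pair_in_KS (S : {set 'I_n}) (q p : 'cV[R]_n) : simplex n q -> simplex n p ->
  (forall i, i \notin S -> q i 0 = 0) -> (forall i, i \in S -> p i 0 = 0) ->
  KS S (q + p)^T /\ gS S (q + p)^T = N (A *m q - A *m p).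
Proof.
move=> [q0 sq] [p0 sp] qS pS; split; first split; first split.
- by move=> i; rewrite !mxE addr_ge0.
- apply: (etrans _ sq); apply: eq_bigr => i _; rewrite !mxE.
  case: (boolP (i \in S)) => iS; first by rewrite pS // addr0 mul1r.
  by rewrite qS // mul0r.
- apply: (etrans _ sp); apply: eq_bigr => i _; rewrite !mxE.
  case: (boolP (i \in S)) => iS /=; first by rewrite pS // mul0r.
  by rewrite qS // add0r mul1r.
rewrite /gS -mulmxBr; congr (N (A *m _)); apply/matrixP => i l.
rewrite (ord1 l) !mxE.
case: (boolP (i \in S)) => iS; first by rewrite pS // addr0 subr0.
by rewrite qS // add0r sub0r.
Qed.

Lemma KS_pair (S : {set 'I_n}) V : KS S V -> exists q p : 'cV[R]_n, [/\ simplex n q, simplex n p,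
  (forall i, i \notin S -> q i 0 = 0), (forall i, i \in S -> p i 0 = 0) &
  gS S V = N (A *m q - A *m p)].
Proof.
move=> [[H0 H1] H2].
exists (\col_i (if i \in S then V 0 i else 0)), (\col_i (if i \in S then 0 else V 0 i)).
split.
- split; first by move=> i; rewrite mxE; case: (i \in S).
  apply: (etrans _ H1); apply: eq_bigr => i _; rewrite mxE.
  by case: (i \in S); rewrite ?mul1r ?mul0r.
- split; first by move=> i; rewrite mxE; case: (i \in S).
  apply: (etrans _ H2); apply: eq_bigr => i _; rewrite mxE.
  by case: (i \in S); rewrite ?mul1r ?mul0r.
- by move=> i /negbTE iS; rewrite mxE iS.
- by move=> i iS; rewrite mxE iS.
rewrite /gS -mulmxBr; congr (N (A *m _)); apply/matrixP => i l.
rewrite (ord1 l) !mxE.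
by case: (i \in S); rewrite ?subr0 ?sub0r.
Qed.

Lemma face_supp F (q : 'cV[R]_n) : is_face (convA A) F -> simplex n q -> F (A *m q) ->
  forall i, i \notin Sof F -> q i 0 = 0.
Proof.
move=> Ff Hq Fq i; rewrite SofE => /asboolPn nF.
have q0 : 0 <= q i 0 by case: Hq.
case: (eqVneq (q i 0) 0) => // qn; exfalso; apply: nF.
by apply: (supp_face Ff Hq Fq); rewrite lt_def qn q0.
Qed.

Lemma outside_supp F (p : 'cV[R]_n) : (forall j, F (col j A) -> p j 0 = 0) ->
  forall i, i \in Sof F -> p i 0 = 0.
Proof. by move=> H i; rewrite SofE => /asboolP; apply: H. Qed.

Lemma face_KS_ne F : proper_face F -> KS (Sof F) !=set0.
Proof.
move=> [Ff [[v Fv] Fne]].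
have [Fsub Fc _] := Ff.
have [q Hq Aq] := Fsub v Fv.
have [k kS] : exists k, k \notin Sof F.
  apply: contrapT => H; move/eqP: Fne; apply.
  apply/seteqP; split => // w [y Hy <-].
  apply: conv_in_F => // j _.
  have : j \in Sof F by apply: contrapT => h; apply: H; exists j; apply/negP.
  by rewrite SofE => /asboolP.
have Fq : F (A *m q) by rewrite Aq.
have kz : forall i, i \in Sof F -> ev k i 0 = 0.
  move=> i iS; rewrite ev_entry; case: (eqVneq i k) => [e|] //.
  by move: kS; rewrite -e iS.
have [K _] := @pair_in_KS (Sof F) q (ev k) Hq (ev_simplex k) (face_supp Ff Hq Fq) kz.
by exists ((q + ev k)^T).
Qed.

Lemma set_dist_ge_mS F : proper_face F -> mS (Sof F) <= set_dist N F (conv_outside A F).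
Proof.
move=> HF; have [Ff _] := HF; have [Fsub _ _] := Ff.
have [V KV] := face_KS_ne HF.
have [q [p [Hq Hp qS pS _]]] := KS_pair KV.
apply: inf_ge_nn.
  exists (N (A *m q - A *m p)), (A *m q).
    apply: conv_in_F => //; first by case: Ff.
    move=> j qj; have : j \in Sof F.
      by apply: contraT => /qS; move: qj => /[swap] ->; rewrite ltxx.
    by rewrite SofE => /asboolP.
  exists (A *m p) => //; exists p => //; split => // j Fj.
  by apply: pS; rewrite SofE; apply/asboolP.
move=> _ [a Fa [b [p' [Hp' p'0] <-] <-]].
have [q' Hq' Aq'] := Fsub a Fa.
have Fq' : F (A *m q') by rewrite Aq'.
have [K gE] := @pair_in_KS (Sof F) q' p' Hq' Hp' (face_supp Ff Hq' Fq') (outside_supp p'0).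
by rewrite -Aq' -gE; apply: mS_le.
Qed.

Lemma seq_argmin (T : eqType) (f : T -> R) (t0 : T) (s : seq T) :
  exists t, t \in t0 :: s /\ forall t', t' \in t0 :: s -> f t <= f t'.
Proof.
elim: s t0 => [|a s IH] t0.
  by exists t0; split; [rewrite mem_head | move=> t'; rewrite inE => /eqP ->].
have [t [ts Ht]] := IH a.
case: (leP (f t0) (f t)) => h.
  exists t0; split; first by rewrite mem_head.
  move=> t'; rewrite inE => /orP[/eqP -> //|/Ht]; exact: le_trans.
exists t; split; first by rewrite inE ts orbT.
move=> t'; rewrite inE => /orP[/eqP ->|/Ht //]; exact: ltW.
Qed.

Lemma fin_argmin (T : finType) (P : T -> Prop) (f : T -> R) :
  (exists t, P t) -> exists t, P t /\ forall t', P t' -> f t <= f t'.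
Proof.
move=> [t0 Pt0].
have [t [ts Ht]] := seq_argmin f t0 [seq t <- enum T | `[< P t >]].
exists t; split.
  move: ts; rewrite inE => /orP[/eqP -> //|].
  by rewrite mem_filter => /andP[/asboolP].
move=> t' Pt'; apply: Ht; rewrite inE mem_filter mem_enum andbT.
by apply/orP; right; apply/asboolP.
Qed.

Lemma Phi_in_ratios : (exists i j : 'I_n, col i A != col j A) ->
  ratios N A (facial_dist N A).
Proof.
move=> H2.
have [u [x [Cu Hx HnZ _]]] := diam_in_ratios H2.
have [F0 [v0 [w0 [Ff0 F00 Fne0 _ _]]]] := key_face Cu Hx HnZ.
have HF0 : proper_face F0 by split => //; split.
have [S [[F [HF ->]] Smin]] := @fin_argmin _
   (fun S => exists F, proper_face F /\ S = Sof F) mS (ex_intro _ (Sof F0) (ex_intro _ F0 (conj HF0 erefl))).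
have [Ff [_ _]] := HF.
have [V [KV gV]] := mS_attained (face_KS_ne HF).
have [q [p [Hq Hp qS pS gE]]] := KS_pair KV.
have Fq : F (A *m q).
  apply: conv_in_F => //; first by case: Ff.
  move=> j qj; have : j \in Sof F.
    by apply: contraT => /qS; move: qj => /[swap] ->; rewrite ltxx.
  by rewrite SofE => /asboolP.
have pF : forall j, F (col j A) -> p j 0 = 0.
  by move=> j Fj; apply: pS; rewrite SofE; apply/asboolP.
have Rq := face_ratio Ff Hq Fq Hp pF.
suff -> : facial_dist N A = N (A *m q - A *m p) by [].
apply/eqP; rewrite eq_le; apply/andP; split.
  apply: le_trans (Phi_le HF) _; apply: set_dist_le => //.
  by exists p.
rewrite -gE gV; apply: inf_ge_nn.
  by exists (set_dist N F (conv_outside A F)), F.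
move=> _ [F' HF' <-].
apply: le_trans (set_dist_ge_mS HF').
by apply: Smin; exists F'.
Qed.

End Basic.

Theorem proposition1 (R : realType) (m n : nat) (N : 'cV[R]_m -> R)
  (A : 'M[R]_(m, n)) :
  is_norm N ->
  (exists i j : 'I_n, col i A != col j A) ->
  is_max (ratios N A) (diamA N A) /\ is_min (ratios N A) (facial_dist N A).
Proof.
move=> hN H2; split; split.
- exact: diam_in_ratios.
- by move=> r Hr; apply: (ratio_le_diam hN).
- exact: Phi_in_ratios.
- by move=> r Hr; apply: (ratio_ge_Phi hN).
Qed.
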